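(* Let $L$ be a distributive lattice with a maximum and a minimum. Then $\mathrm{FVL}\langle L\rangle$ is order dense in $\mathrm{FBL}\langle L\rangle$, i.e. for every $f\in\mathrm{FBL}\langle L\rangle$ with $f>0$ there exists $g\in\mathrm{FVL}\langle L\rangle$ with $0<g\le f$.
   Context: $L^*$ is the set of all lattice homomorphisms $x^*:L\to[-1,1]$; for $x\in L$, $\delta_x:L^*\to\mathbb R$ is $\delta_x(x^* )=x^*(x)$. A function $f:L^*\to\mathbb R$ is positively homogeneous if $f(\lambda x^* )=\lambda f(x^* )$ whenever $\lambda\ge0$ and $\lambda x^*\in L^*$; for such $f$, $\|f\|=\sup\{\sum_{i=1}^m|f(x_i^* )|: m\in\mathbb N,\ x_i^*\in L^*,\ \sup_{x\in L}\sum_{i=1}^m|x_i^*(x)|\le1\}$. $\mathrm{FVL}\langle L\rangle$ is the vector sublattice generated by $\{\delta_x:x\in L\}$ (pointwise operations), and $\mathrm{FBL}\langle L\rangle$ is its norm closure inside the Banach lattice of positively homogeneous functions with finite norm, ordered pointwise. *)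

(* Defs.v *)
From HB Require Import structures.
From mathcomp Require Import all_boot all_order all_algebra.
From mathcomp Require Import all_classical all_reals ereal.
Set Implicit Arguments. Unset Strict Implicit. Unset Printing Implicit Defensive.
Import Order.TTheory GRing.Theory Num.Theory.
Local Open Scope ring_scope.

Section FBL.
Variables (R : realType) (d : Order.disp_t) (L : tbDistrLatticeType d).

Definition Lstar (xs : L -> R) : Prop :=
  (forall x, -1 <= xs x <= 1) /\
  (forall x y, xs (Order.meet x y) = Num.min (xs x) (xs y)) /\
  (forall x y, xs (Order.join x y) = Num.max (xs x) (xs y)).

Definition delta (x : L) : (L -> R) -> R := fun xs => xs x.

Definition scale_star (lam : R) (xs : L -> R) : L -> R := fun x => lam * xs x.

Definition pos_homogeneous (f : (L -> R) -> R) : Prop :=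
  forall (lam : R) (xs : L -> R), 0 <= lam -> Lstar xs -> Lstar (scale_star lam xs) ->
    f (scale_star lam xs) = lam * f xs.

Definition fbl_norm (f : (L -> R) -> R) : \bar R :=
  ereal_sup [set r : \bar R | exists (m : nat) (xs : 'I_m -> (L -> R)),
     [/\ (forall i, Lstar (xs i)),
        (ereal_sup [set ((\sum_(i < m) `|xs i x|)%:E) | x in [set: L]] <= 1%:E)%E
      & r = (\sum_(i < m) `|f (xs i)|)%:E]]%classic.

Inductive FVL : ((L -> R) -> R) -> Prop :=
  | FVL_delta x : FVL (delta x)
  | FVL_zero : FVL (fun _ => 0)
  | FVL_add f g : FVL f -> FVL g -> FVL (fun xs => f xs + g xs)
  | FVL_scale (a : R) f : FVL f -> FVL (fun xs => a * f xs)
  | FVL_max f g : FVL f -> FVL g -> FVL (fun xs => Num.max (f xs) (g xs))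
  | FVL_min f g : FVL f -> FVL g -> FVL (fun xs => Num.min (f xs) (g xs)).

Definition FBL (f : (L -> R) -> R) : Prop :=
  pos_homogeneous f /\ (fbl_norm f < +oo)%E /\
  forall eps : R, 0 < eps -> exists g, FVL g /\
    (fbl_norm (fun xs => (f xs - g xs)%R) < eps%:E)%E.

Definition fle (f g : (L -> R) -> R) : Prop := forall xs, Lstar xs -> f xs <= g xs.
Definition fpos (f : (L -> R) -> R) : Prop :=
  fle (fun _ => 0) f /\ exists xs, Lstar xs /\ f xs != 0.

End FBL.

(* Main.v *)
Require Import Defs.
From HB Require Import structures.
From mathcomp Require Import all_boot all_order all_algebra.
From mathcomp Require Import all_classical all_reals ereal.
From mathcomp Require Import lra.
Import Order.TTheory GRing.Theory Num.Theory.
Local Open Scope ring_scope.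
Set Implicit Arguments.

Section Aux.
Variables (R : realType) (d : Order.disp_t) (L : tbDistrLatticeType d).

Lemma FVL_hom (g : (L -> R) -> R) : FVL g ->
  forall (lam : R) xs, 0 <= lam -> g (scale_star lam xs) = lam * g xs.
Proof.
elim=> {g} [x||g h _ IHg _ IHh|a g _ IH|g h _ IHg _ IHh|g h _ IHg _ IHh] lam xs hl /=.
- by [].
- by rewrite mulr0.
- by rewrite IHg // IHh // mulrDr.
- by rewrite IH // mulrCA.
- by rewrite IHg // IHh // maxr_pMr.
- by rewrite IHg // IHh // minr_pMr.
Qed.

Lemma norm_pt (h : (L -> R) -> R) y : Lstar y ->
  (`|h y|%:E <= fbl_norm h)%E.
Proof.
move=> Ly; apply: ereal_sup_ubound; exists 1%N, (fun _ => y); split => //.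
  apply: ge_ereal_sup => r [x _ <-].
  rewrite big_ord1 lee_fin ler_norml.
  by case: Ly => /(_ x) -> _.
by rewrite big_ord1.
Qed.

Lemma Lstar_mono (xs : L -> R) : Lstar xs -> forall x,
  xs \bot%O <= xs x <= xs \top%O.
Proof.
case=> _ [hm hj] x.
have h1 : xs x = Num.min (xs x) (xs \top%O) by rewrite -hm meetx1.
have h2 : xs x = Num.max (xs \bot%O) (xs x) by rewrite -hj join0x.
apply/andP; split.
  by rewrite h2 le_max lexx.
by rewrite h1 ge_min lexx orbT.
Qed.

Definition ee : (L -> R) -> R :=
  fun xs => Num.max (delta \top%O xs) ((-1) * delta \bot%O xs).

Lemma FVL_ee : FVL ee.
Proof. apply: FVL_max; [exact: FVL_delta | apply: FVL_scale; exact: FVL_delta]. Qed.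

Lemma key (f g : (L -> R) -> R) (eps : R) :
  pos_homogeneous f -> FVL g ->
  (forall y, Lstar y -> `|f y - g y| < eps) ->
  forall xs, Lstar xs -> `|f xs - g xs| <= eps * ee xs.
Proof.
move=> hf hg hn xs Lx.
set t := ee xs.
have bnd : forall x, `|xs x| <= t.
  move=> x; rewrite ler_norml; have /andP[l1 l2] := Lstar_mono Lx x.
  rewrite /t /ee /delta mulN1r; apply/andP; split.
    by rewrite lerNl le_max; apply/orP; right; rewrite lerN2.
  by rewrite le_max; apply/orP; left.
have t0 : 0 <= t by apply: le_trans (bnd \top%O); exact: normr_ge0.
case: (eqVneq t 0) => [tz | tnz].
  have xs0 : scale_star 0 xs = xs.
    apply: funext => x; rewrite /scale_star mul0r.
    by apply/esym/eqP; rewrite -normr_eq0 eq_le normr_ge0 andbT -tz bnd.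
  have Ls0 : Lstar (scale_star 0 xs) by rewrite xs0.
  rewrite -xs0 (hf 0 xs) // (FVL_hom hg) // !mul0r subrr normr0 tz mulr0.
  by [].
have tp : 0 < t by rewrite lt_def tnz t0.
set y := scale_star t^-1 xs.
have Ly : Lstar y.
  case: Lx => _ [hm hj]; split; [|split].
  - move=> x; rewrite -ler_norml /y /scale_star normrM ger0_norm ?invr_ge0 //.
    by rewrite ler_pdivrMl // mulr1.
  - by move=> x z; rewrite /y /scale_star hm minr_pMr // invr_ge0.
  - by move=> x z; rewrite /y /scale_star hj maxr_pMr // invr_ge0.
have xsy : scale_star t y = xs.
  by apply: funext => x; rewrite /y /scale_star mulrA mulfV ?mul1r.
have Lty : Lstar (scale_star t y) by rewrite xsy.
rewrite -xsy (hf t y) // (FVL_hom hg) // -mulrBr normrM ger0_norm //.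
rewrite mulrC ler_pM2r //; exact: ltW (hn y Ly).
Qed.

End Aux.

Theorem mainTheorem7 (R : realType) (d : Order.disp_t) (L : tbDistrLatticeType d)
  (f : (L -> R) -> R) :
  FBL f -> fpos f ->
  exists g : (L -> R) -> R, FVL g /\ fpos g /\ fle g f.
Proof.
move=> [hf [_ happ]] [f0 [xs0 [L0 fn0]]].
set a := f xs0.
have ap : 0 < a by rewrite lt_def fn0 (f0 xs0 L0).
set eps := a / 4.
have ep : 0 < eps by rewrite divr_gt0.
have [g [hg hng]] := happ eps ep.
have hn : forall y, Lstar y -> `|f y - g y| < eps.
  move=> y Ly; rewrite -lte_fin; apply: le_lt_trans hng.
  exact: (norm_pt (fun xs => f xs - g xs) Ly).
have K := @key R d L f g eps hf hg hn.
pose h := fun xs => Num.max (g xs + (- eps) * ee R L xs) 0.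
have eb : forall xs, Lstar xs -> 0 <= ee R L xs <= 1.
  move=> xs Lx; have /andP[l1 l2] := Lstar_mono Lx \bot%O.
  case: Lx => Lb _; have /andP[a1 a2] := Lb \top%O; have /andP[b1 b2] := Lb \bot%O.
  rewrite /ee /delta mulN1r le_max ge_max a2 lerNl b1 andbT.
  case: (lerP 0 (xs \top%O)) => hh; first by [].
  by rewrite oppr_ge0 ltW // (le_lt_trans l2 hh).
exists h; split.
  apply: FVL_max; [apply: FVL_add => //; apply: FVL_scale; exact: (FVL_ee R L)|exact: FVL_zero].
split; last first.
  move=> xs Lx; rewrite /h ge_max (f0 xs Lx) andbT mulNr.
  have := K xs Lx; rewrite ler_norml => /andP[k1 _].
  move: k1; lra.
split.
  by move=> xs _; rewrite /h le_max lexx orbT.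
exists xs0; split => //.
rewrite /h; apply/lt0r_neq0.
rewrite lt_max; apply/orP; left.
have := K xs0 L0; rewrite ler_norml => /andP[_ k2].
have /andP[e0 e1] := eb xs0 L0.
have e2 : eps * ee R L xs0 <= eps by rewrite ler_piMr // ltW.
have : eps = f xs0 / 4 by [].
move: k2 e2; rewrite mulNr; lra.
Qed.
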